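(* Let $A\in\mathbb{R}^{n\times n}$ be symmetric positive definite with eigenvalues $0<\lambda_1\le\cdots\le\lambda_n$, $\lambda_1<\lambda_n$, and a corresponding orthonormal basis of eigenvectors $v_1,\dots,v_n$, let $c\in\mathbb{R}^n$, and consider the Barzilai--Borwein (BB) method applied to $\min_{x\in\mathbb{R}^n}\frac12x^\top Ax-c^\top x$, started from an arbitrary $x_0\in\mathbb{R}^n$. Let $g_k=Ax_k-c$, write $g_k=\sum_{i=1}^n d_k^iv_i$, let $\kappa=\lambda_n/\lambda_1$ and $\theta=1-\frac1\kappa$. For $i=1,\dots,n$ let $C_i=\max\left\{\frac{\lambda_i}{\lambda_1}-1,\ 1-\frac{\lambda_i}{\lambda_n}\right\}$ and define recursively $$F_1=|d_0^1|,\qquad F_i=\max\left\{|d_0^i|,\ \frac{|d_1^i|}{\theta},\ \theta^{-2}C_i^2\sqrt{\textstyle\sum_{j=1}^{i-1}F_j^2}\right\}\quad(i\ge2).$$ Then for every $k\ge1$ and every $i=1,\dots,n$, $|d_k^i|\le F_i\theta^k$; in particular each sequence $\{d_k^i\}$ converges to $0$ at least $R$-linearly with rate $\theta=1-\frac1\kappa$.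
   Context: The BB method for this problem: $x_1=x_0-\alpha_0 g_0$ with the exact line-search (steepest descent) step $\alpha_0=\frac{g_0^\top g_0}{g_0^\top A g_0}$, and for $k\ge1$, $x_{k+1}=x_k-\alpha_k g_k$ with $\alpha_k=\frac{s_{k-1}^\top s_{k-1}}{s_{k-1}^\top y_{k-1}}$, $s_{k-1}=x_k-x_{k-1}$, $y_{k-1}=g_k-g_{k-1}$; for this quadratic this equals $\alpha_k=\frac{g_{k-1}^\top g_{k-1}}{g_{k-1}^\top A g_{k-1}}$. Equivalently, the coefficients satisfy $d_1^i=d_0^i\cdot\frac{\sum_{j}(\lambda_j-\lambda_i)(d_0^j)^2}{\sum_j\lambda_j(d_0^j)^2}$ and $d_{k+1}^i=d_k^i\cdot\frac{\sum_{j}(\lambda_j-\lambda_i)(d_{k-1}^j)^2}{\sum_j\lambda_j(d_{k-1}^j)^2}$ for $k\ge1$. Convention: if some gradient vanishes, the method has reached the minimizer and all subsequent gradients (coefficients) are taken to be zero. *)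

(* Defs.v *)
From HB Require Import structures.
From mathcomp Require Import all_boot all_order all_algebra.
From mathcomp Require Import reals.
Set Implicit Arguments. Unset Strict Implicit. Unset Printing Implicit Defensive.
Import Order.TTheory GRing.Theory Num.Theory.
Local Open Scope ring_scope.

Section BB.
Variables (R : realType) (m : nat) (A : 'M[R]_m) (c : 'cV[R]_m).

Definition grad (x : 'cV[R]_m) : 'cV[R]_m := A *m x - c.

Definition dotv (u v : 'cV[R]_m) : R := (u^T *m v) 0 0.

(* bb_pair x0 k = (x_k, x_{k+1}) for the BB method:
   x_1 = x_0 - alpha_0 g_0 with alpha_0 = g_0^T g_0 / g_0^T A g_0 (exact line search),
   x_{k+1} = x_k - alpha_k g_k with alpha_k = s^T s / s^T y,
   s = x_k - x_{k-1}, y = g_k - g_{k-1}  (k >= 1).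
   Note: x/0 = 0 in MathComp, so once a gradient vanishes the iterates
   stay at the minimizer and all later gradients are zero (the convention). *)
Fixpoint bb_pair (x0 : 'cV[R]_m) (k : nat) : 'cV[R]_m * 'cV[R]_m :=
  match k with
  | 0 => let g0 := grad x0 in
         (x0, x0 - (dotv g0 g0 / dotv g0 (A *m g0)) *: g0)
  | k'.+1 => let p := bb_pair x0 k' in
             let s := p.2 - p.1 in
             let y := grad p.2 - grad p.1 in
             (p.2, p.2 - (dotv s s / dotv s y) *: grad p.2)
  end.

Definition bb_iter (x0 : 'cV[R]_m) (k : nat) : 'cV[R]_m := (bb_pair x0 k).1.

End BB.

(* Recursive bound F_i (0-based index i here; paper's F_{i+1}).
   Faux a b C th i = (F_i, sum_{j<=i} F_j^2), where
   a j = |d_0^j|, b j = |d_1^j|, C j = C_j, th = theta: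
   F_0 = a 0,  F_i = max { a i, b i / th, th^-2 C_i^2 sqrt(sum_{j<i} F_j^2) }. *)
Fixpoint Faux (R : realType) (a b C : nat -> R) (th : R) (i : nat) : R * R :=
  match i with
  | 0 => (a 0%N, a 0%N ^+ 2)
  | i'.+1 =>
      let s := (Faux a b C th i').2 in
      let f := Num.max (a i) (Num.max (b i / th)
                  (th ^-2 * C i ^+ 2 * Num.sqrt s)) in
      (f, s + f ^+ 2)
  end.

Definition Fbound (R : realType) (a b C : nat -> R) (th : R) (i : nat) : R :=
  (Faux a b C th i).1.

(* Main.v *)
Require Import Defs.
From HB Require Import structures.
From mathcomp Require Import all_boot all_order all_algebra.
From mathcomp Require Import reals ring lra.
Import Order.TTheory GRing.Theory Num.Theory.
Set Implicit Arguments. Unset Strict Implicit.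
Local Open Scope ring_scope.
Section Core.
Variables (R : realType) (n : nat) (lam : 'I_n.+1 -> R) (d : nat -> 'I_n.+1 -> R) (al : nat -> R).
Hypothesis lam_mono : forall i j : 'I_n.+1, (i <= j)%N -> lam i <= lam j.
Hypothesis lam0 : 0 < lam ord0.
Hypothesis lamgap : lam ord0 < lam ord_max.

Definition GG k := \sum_(i < n.+1) d k i ^+ 2.
Definition HH k := \sum_(i < n.+1) lam i * d k i ^+ 2.
Definition th := 1 - lam ord0 / lam ord_max.
Definition CC i := Num.max (lam i / lam ord0 - 1) (1 - lam i / lam ord_max).

Hypothesis hstep : forall k i, d k.+1 i = (1 - al k * lam i) * d k i.
Hypothesis hal0 : al 0 = GG 0 / HH 0.
Hypothesis halS : forall k, al k.+1 = (al k ^+ 2 * GG k) / (al k ^+ 2 * HH k).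

Lemma lam_ge i : lam ord0 <= lam i.
Proof. exact: lam_mono. Qed.

Lemma lam_le i : lam i <= lam ord_max.
Proof. apply: lam_mono; rewrite /= -ltnS; exact: ltn_ord. Qed.

Lemma GG_ge0 k : 0 <= GG k.
Proof. by apply: sumr_ge0 => i _; exact: sqr_ge0. Qed.

Lemma HH_ge k : lam ord0 * GG k <= HH k.
Proof.
rewrite /GG /HH mulr_sumr; apply: ler_sum => i _.
by apply: ler_wpM2r; [exact: sqr_ge0 | exact: lam_ge].
Qed.

Lemma HH_le k : HH k <= lam ord_max * GG k.
Proof.
rewrite /GG /HH mulr_sumr; apply: ler_sum => i _.
by apply: ler_wpM2r; [exact: sqr_ge0 | exact: lam_le].
Qed.

Lemma GG_eq0 k : GG k = 0 -> forall i, d k i = 0.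
Proof.
move=> h i; have := @psumr_eq0P _ _ _ _ (fun i _ => sqr_ge0 (d k i)) h i isT.
by move/eqP; rewrite sqrf_eq0 => /eqP.
Qed.

Lemma zero_GG k : (forall i, d k i = 0) -> GG k = 0.
Proof. by move=> h; rewrite /GG big1 // => i _; rewrite h expr0n. Qed.

Lemma zero_next k : (forall i, d k i = 0) -> forall i, d k.+1 i = 0.
Proof. by move=> h i; rewrite hstep h mulr0. Qed.

Lemma al_zero k : al k = 0 -> GG k = 0.
Proof.
elim: k => [|k IH].
  rewrite hal0 => /eqP; rewrite mulf_eq0 invr_eq0 => /orP[/eqP //|/eqP hH].
  have := HH_ge 0; rewrite hH => h1.
  apply/eqP; rewrite eq_le GG_ge0 andbT.
  by rewrite -(pmulr_rle0 _ lam0).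
rewrite halS => /eqP; rewrite mulf_eq0 invr_eq0 => h.
have Gk : GG k = 0.
  have [a0|an0] := eqVneq (al k) 0; first exact: IH.
  move: h; rewrite !mulf_eq0 (negbTE an0) /= => /orP[/eqP //|/eqP hH].
  have := HH_ge k; rewrite hH => h1.
  apply/eqP; rewrite eq_le GG_ge0 andbT.
  by rewrite -(pmulr_rle0 _ lam0).
by apply: zero_GG; apply: zero_next; exact: GG_eq0.
Qed.

Lemma alE k : al k = GG k.-1 / HH k.-1.
Proof.
case: k => [|k] //=; rewrite halS.
have [a0|an0] := eqVneq (al k) 0.
  by rewrite a0 (al_zero a0) expr0n /= !mul0r.
by rewrite invfM mulrACA divff ?mul1r // expf_neq0.
Qed.


Definition tt k := GG k / HH k.

Lemma step_mu k i : d k.+1 i = (1 - lam i * tt k.-1) * d k i.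
Proof. by rewrite hstep alE /tt [lam i * _]mulrC. Qed.

Lemma GG_prev k : GG k.-1 = 0 -> forall i, d k i = 0.
Proof. case: k => [|k] /= h; first exact: GG_eq0. by apply: zero_next; exact: GG_eq0. Qed.

Lemma HH_pos j : 0 < GG j -> 0 < HH j.
Proof. move=> h; exact: (lt_le_trans (mulr_gt0 lam0 h) (HH_ge j)). Qed.

Lemma tt_bounds j : 0 < GG j ->
  [/\ 0 < tt j, lam ord0 * tt j <= 1 & 1 <= lam ord_max * tt j].
Proof.
move=> hG; have hH := HH_pos hG.
have e : tt j * HH j = GG j by rewrite /tt divfK // gt_eqF.
have t0 : 0 < tt j by rewrite /tt divr_gt0.
have h1 := HH_ge j; have h2 := HH_le j.
split => //; nra.
Qed.

Lemma th_ge0 : 0 <= th.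
Proof.
rewrite /th subr_ge0 ler_pdivrMr ?mul1r; [exact: ltW | exact: lt_trans lamgap].
Qed.

Lemma th_gt0 : 0 < th.
Proof.
rewrite /th subr_gt0 ltr_pdivrMr ?mul1r //; exact: lt_trans lamgap.
Qed.

Lemma mu_theta j i : 0 < GG j -> lam i * tt j <= 1 -> `|1 - lam i * tt j| <= th.
Proof.
move=> hG hi; have [t0 t1 t2] := tt_bounds hG.
have lm : 0 < lam ord_max by exact: lt_trans lamgap.
set q := lam ord0 / lam ord_max.
have eq : q * lam ord_max = lam ord0 by rewrite /q divfK // gt_eqF.
have li := lam_ge i.
rewrite ger0_norm ?subr_ge0 // /th -/q.
have : q <= lam i * tt j; last by lra.
have q0 : 0 <= q by rewrite /q divr_ge0 // ltW.
have h1 : 0 <= (lam i - lam ord0) * tt j by rewrite mulr_ge0 ?subr_ge0 // ltW.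
have h2 : 0 <= q * (lam ord_max * tt j - 1) by rewrite mulr_ge0 ?subr_ge0.
nra.
Qed.

Lemma step_theta k i : lam i * GG k.-1 <= HH k.-1 -> `|d k.+1 i| <= th * `|d k i|.
Proof.
move=> h.
have [G0|Gp] := eqVneq (GG k.-1) 0.
  by rewrite step_mu (GG_prev G0) !(mulr0, normr0).
have hG : 0 < GG k.-1 by rewrite lt_def Gp GG_ge0.
have hH := HH_pos hG.
have e : tt k.-1 * HH k.-1 = GG k.-1 by rewrite /tt divfK // gt_eqF.
have [t0 t1 t2] := tt_bounds hG.
have hi : lam i * tt k.-1 <= 1 by nra.
rewrite step_mu normrM; apply: ler_wpM2r => //; exact: mu_theta.
Qed.

Lemma CC_ge1 i : lam i / lam ord0 - 1 <= CC i.
Proof. by rewrite /CC le_max lexx. Qed.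
Lemma CC_ge2 i : 1 - lam i / lam ord_max <= CC i.
Proof. by rewrite /CC le_max lexx orbT. Qed.

Lemma mu_C j i : 0 < GG j -> `|1 - lam i * tt j| <= CC i.
Proof.
move=> hG; have [t0 t1 t2] := tt_bounds hG.
have lm : 0 < lam ord_max by exact: lt_trans lamgap.
have li := lam_ge i.
have [h|h] := boolP (lam i * tt j <= 1); last first.
  have {}h : 1 < lam i * tt j by rewrite ltNge.
  rewrite ltr0_norm ?subr_lt0 //; apply: le_trans (CC_ge1 i).
  set p := lam i / lam ord0.
  have eq : p * lam ord0 = lam i by rewrite /p divfK // gt_eqF.
  have p0 : 0 <= p by rewrite /p divr_ge0 // ltW // (lt_le_trans lam0).
  have : lam i * tt j <= p; last by lra.
  nra.
rewrite ger0_norm ?subr_ge0 //; apply: le_trans (CC_ge2 i).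
set s := lam i / lam ord_max.
have eq : s * lam ord_max = lam i by rewrite /s divfK // gt_eqF.
have : s <= lam i * tt j; last by lra.
have s0 : 0 <= s by rewrite /s divr_ge0 // ltW // (lt_le_trans lam0).
nra.
Qed.


Lemma mu_small j i : 0 < GG j -> 1 < lam i * tt j ->
  `|(1 - lam i * tt j) * d j i| <=
     CC i * Num.sqrt (\sum_(l < n.+1 | (l < i)%N) d j l ^+ 2).
Proof.
move=> hG hi; have [t0 t1 t2] := tt_bounds hG.
have hH := HH_pos hG.
have e : tt j * HH j = GG j by rewrite /tt divfK // gt_eqF.
set t := tt j in t0 t1 t2 hi e *.
set S := \sum_(l < n.+1 | (l < i)%N) d j l ^+ 2.
have S0 : 0 <= S by apply: sumr_ge0 => l _; exact: sqr_ge0.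
have sum0 : \sum_(l < n.+1) (lam l * t - 1) * d j l ^+ 2 = 0.
  have -> : \sum_(l < n.+1) (lam l * t - 1) * d j l ^+ 2 = t * HH j - GG j.
    rewrite /HH /GG mulr_sumr -sumrB; apply: eq_bigr => l _; ring.
  by rewrite e subrr.
rewrite (bigID (fun l : 'I_n.+1 => (l < i)%N)) /= in sum0.
have hB : (lam i * t - 1) * d j i ^+ 2 <=
    \sum_(l < n.+1 | ~~ (l < i)%N) (lam l * t - 1) * d j l ^+ 2.
  rewrite (bigD1 i) /= ?ltnn // lerDl; apply: sumr_ge0 => l /andP[hl _].
  apply: mulr_ge0; last exact: sqr_ge0.
  have : lam i <= lam l by apply: lam_mono; rewrite leqNgt.
  nra.
have hA : (lam ord0 * t - 1) * S <=
    \sum_(l < n.+1 | (l < i)%N) (lam l * t - 1) * d j l ^+ 2.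
  rewrite /S mulr_sumr; apply: ler_sum => l _.
  apply: ler_wpM2r; first exact: sqr_ge0.
  have := lam_ge l; nra.
have key : (lam i * t - 1) * d j i ^+ 2 <= (1 - lam ord0 * t) * S by lra.
set p := lam i / lam ord0.
have li := lam_ge i.
have eq : p * lam ord0 = lam i by rewrite /p divfK // gt_eqF.
have p0 : 0 <= p by rewrite /p divr_ge0 // ltW // (lt_le_trans lam0).
have a1 : lam i * t - 1 <= CC i.
  apply: le_trans (CC_ge1 i); rewrite -/p.
  have : lam i * t <= p; last by lra.
  nra.
have a2 : 1 - lam ord0 * t <= CC i.
  apply: le_trans (CC_ge1 i); rewrite -/p.
  set w := lam ord0 * t.
  have w0 : 0 < w by rewrite /w mulr_gt0.
  have pw : 1 < p * w by rewrite /w mulrA eq.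
  have : 0 <= w * (p + w - 2) by have := sqr_ge0 (w - 1); nra.
  nra.
have C0 : 0 <= CC i by apply: le_trans a1; lra.
have sq : `|(1 - lam i * t) * d j i| ^+ 2 <= (CC i * Num.sqrt S) ^+ 2.
  rewrite real_normK ?num_real // !exprMn sqr_sqrtr //.
  have -> : (1 - lam i * t) ^+ 2 = (lam i * t - 1) * (lam i * t - 1) by ring.
  rewrite -mulrA.
  apply: le_trans (_ : (lam i * t - 1) * ((1 - lam ord0 * t) * S) <= _).
    apply: ler_wpM2l; [lra | exact: key].
  rewrite mulrA expr2; apply: ler_wpM2r => //.
  apply: ler_pM => //; lra.
rewrite -ler_sqr // ?nnegrE //; apply: mulr_ge0 => //; exact: sqrtr_ge0.
Qed.


Section Bound.
Variable F : 'I_n.+1 -> R.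
Hypothesis hFa : forall i, `|d 0 i| <= F i.
Hypothesis hFb : forall i : 'I_n.+1, (0 < i)%N -> `|d 1 i| <= F i * th.
Hypothesis hFc : forall i : 'I_n.+1, (0 < i)%N ->
  CC i ^+ 2 * Num.sqrt (\sum_(l < n.+1 | (l < i)%N) F l ^+ 2) <= F i * th ^+ 2.

Lemma F_ge0 i : 0 <= F i.
Proof. exact: le_trans (normr_ge0 _) (hFa i). Qed.

Lemma one_i (i : 'I_n.+1) :
  (forall l : 'I_n.+1, (l < i)%N -> forall k, `|d k l| <= F l * th ^+ k) ->
  forall k, `|d k i| <= F i * th ^+ k.
Proof.
move=> IHi.
have th0 := th_ge0; have thp := th_gt0.
suff h : forall k, `|d k i| <= F i * th ^+ k /\ `|d k.+1 i| <= F i * th ^+ k.+1.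
  by move=> k; case: (h k).
elim=> [|k [IH1 IH2]].
  split; first by rewrite expr0 mulr1.
  case: (posnP i) => [i0|ipos]; last exact: hFb.
  have -> : i = ord0 by apply: val_inj.
  apply: le_trans (step_theta (k:=0) _) _; first exact: HH_ge.
  by rewrite expr1 [F _ * _]mulrC; apply: ler_wpM2l => //; exact: hFa.
split; first exact: IH2.
have [hle|hlt] := boolP (lam i * GG k <= HH k).
  apply: le_trans (step_theta (k:=k.+1) hle) _.
  by rewrite exprS mulrCA; apply: ler_wpM2l => //.
have {}hlt : HH k < lam i * GG k by rewrite ltNge.
have hG : 0 < GG k.
  rewrite lt_def GG_ge0 andbT; apply/eqP => G0.
  by move: hlt; rewrite G0 mulr0 ltNge (le_trans _ (HH_ge k)) // G0 mulr0.
have ipos : (0 < i)%N.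
  case: (posnP i) => [i0|//]; have ei : i = ord0 by apply: val_inj.
  by move: hlt; rewrite ei ltNge HH_ge.
have hH := HH_pos hG.
have e : tt k * HH k = GG k by rewrite /tt divfK // gt_eqF.
have hi : 1 < lam i * tt k by nra.
have hG' : 0 < GG k.-1.
  rewrite lt_def GG_ge0 andbT; apply/eqP => G0.
  by move: hG; rewrite (zero_GG (GG_prev G0)) ltxx.
rewrite step_mu [d k.+1 i]step_mu /= mulrCA normrM.
set S := \sum_(l < n.+1 | (l < i)%N) d k l ^+ 2.
set SF := \sum_(l < n.+1 | (l < i)%N) F l ^+ 2.
have SF0 : 0 <= SF by apply: sumr_ge0 => l _; exact: sqr_ge0.
have hS : Num.sqrt S <= th ^+ k * Num.sqrt SF.
  rewrite -[th ^+ k]ger0_norm ?exprn_ge0 // -sqrtr_sqr -sqrtrM ?sqr_ge0 //.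
  rewrite ler_sqrt ?mulr_ge0 ?sqr_ge0 ?exprn_ge0 // /S /SF big_distrr /=.
  apply: ler_sum => l hl.
  have h := IHi l hl k.
  rewrite -real_normK ?num_real // -exprMn mulrC.
  by rewrite ler_sqr ?nnegrE ?normr_ge0 // mulr_ge0 ?exprn_ge0 ?F_ge0.
have C0 : 0 <= CC i by apply: le_trans (normr_ge0 _) (mu_C i hG).
apply: le_trans (_ : CC i * (CC i * (th ^+ k * Num.sqrt SF)) <= _).
  apply: ler_pM => //; first exact: mu_C.
  apply: le_trans (mu_small hG hi) _.
  exact: ler_wpM2l.
have := hFc ipos; rewrite -/SF => hc.
have -> : CC i * (CC i * (th ^+ k * Num.sqrt SF)) =
   (CC i ^+ 2 * Num.sqrt SF) * th ^+ k by ring.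
rewrite -[k.+2]/(2 + k)%N exprD mulrA.
by apply: ler_wpM2r => //; exact: exprn_ge0.
Qed.

Lemma core_bound k i : `|d k i| <= F i * th ^+ k.
Proof.
suff h : forall m (i : 'I_n.+1), (i <= m)%N -> forall k, `|d k i| <= F i * th ^+ k.
  exact: h _ i (leqnn _) k.
elim=> [|m IHm] j hj; apply: one_i => l hl.
  by move: hl; rewrite ltnNge (leq_trans hj).
by apply: IHm; rewrite -ltnS (leq_trans hl).
Qed.

End Bound.

End Core.

Section Fa.
Variables (R : realType) (a b C : nat -> R) (th : R).

Lemma Faux_snd i : (Faux a b C th i).2 = \sum_(j < i.+1) (Fbound a b C th j) ^+ 2.
Proof.
elim: i => [|i IH]; first by rewrite big_ord1.
by rewrite big_ord_recr /= -IH.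
Qed.

Lemma Fb_S i : Fbound a b C th i.+1 = Num.max (a i.+1) (Num.max (b i.+1 / th)
                  (th ^-2 * C i.+1 ^+ 2 * Num.sqrt (\sum_(j < i.+1) (Fbound a b C th j) ^+ 2))).
Proof. by rewrite /Fbound /= Faux_snd. Qed.

Lemma Fb_a i : a i <= Fbound a b C th i.
Proof. case: i => [|i]; first by []. by rewrite Fb_S le_max lexx. Qed.

Lemma Fb_b i : (0 < i)%N -> b i / th <= Fbound a b C th i.
Proof. case: i => [|i] // _. by rewrite Fb_S !le_max lexx orbT. Qed.

Lemma Fb_c i : (0 < i)%N ->
  th ^-2 * C i ^+ 2 * Num.sqrt (\sum_(j < i) (Fbound a b C th j) ^+ 2) <= Fbound a b C th i.
Proof. case: i => [|i] // _. by rewrite Fb_S !le_max lexx !orbT. Qed.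
End Fa.

Section Vec.
Variables (R : realType) (m : nat).
Implicit Types u v w : 'cV[R]_m.

Lemma dotvE u v : dotv u v = \sum_(l < m) u l 0 * v l 0.
Proof. rewrite /dotv !mxE; apply: eq_bigr => l _; by rewrite !mxE. Qed.

Lemma dotv_sumr p u (e : 'I_p -> R) (w : 'I_p -> 'cV[R]_m) :
  dotv u (\sum_(j < p) e j *: w j) = \sum_(j < p) e j * dotv u (w j).
Proof.
rewrite dotvE (eq_bigr (fun l => \sum_(j < p) u l 0 * (e j * w j l 0))); last first.
  by move=> l _; rewrite summxE mulr_sumr; apply: eq_bigr => j _; rewrite mxE.
rewrite exchange_big; apply: eq_bigr => j _; rewrite dotvE mulr_sumr.
by apply: eq_bigr => l _; ring.
Qed.

Lemma dotvC u v : dotv u v = dotv v u.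
Proof. by rewrite !dotvE; apply: eq_bigr => l _; rewrite mulrC. Qed.

Lemma dotvZr a u v : dotv u (a *: v) = a * dotv u v.
Proof. rewrite !dotvE mulr_sumr; apply: eq_bigr => l _; rewrite mxE; ring. Qed.

Lemma dotvZl a u v : dotv (a *: u) v = a * dotv u v.
Proof. by rewrite dotvC dotvZr dotvC. Qed.

Lemma dotvBr u v w : dotv u (v - w) = dotv u v - dotv u w.
Proof.
rewrite !dotvE -sumrB; apply: eq_bigr => l _; rewrite !mxE; ring.
Qed.

Lemma dotv_sumr_coef (V : 'M[R]_m) (e : 'I_m -> R) i : V^T *m V = 1%:M ->
  dotv (col i V) (\sum_(j < m) e j *: col j V) = e i.
Proof.
move=> hV; rewrite dotv_sumr.
have orth j : dotv (col i V) (col j V) = (i == j)%:R.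
  have := congr1 (fun M : 'M[R]_m => M i j) hV; rewrite !mxE => <-.
  by rewrite dotvE; apply: eq_bigr => l _; rewrite !mxE.
rewrite (bigD1 i) //= big1 ?addr0; first by rewrite orth eqxx mulr1.
by move=> j hj; rewrite orth eq_sym (negbTE hj) mulr0.
Qed.
End Vec.


Unset Implicit Arguments.

Lemma gradB (R : realType) m (A : 'M[R]_m) c x y :
  grad A c x - grad A c y = A *m (x - y).
Proof. by rewrite /grad mulmxBr opprB addrA subrK. Qed.

Lemma gradZ (R : realType) m (A : 'M[R]_m) c x a g :
  grad A c (x - a *: g) = grad A c x - a *: (A *m g).
Proof. by rewrite /grad mulmxBr scalemxAr addrAC. Qed.

Theorem theorem1 (R : realType) (n : nat) (A : 'M[R]_n.+1)
  (lam : 'I_n.+1 -> R) (V : 'M[R]_n.+1) (c x0 : 'cV[R]_n.+1)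
  (d : nat -> 'I_n.+1 -> R) :
  A^T = A ->
  (forall x : 'cV[R]_n.+1, x != 0 -> 0 < (x^T *m A *m x) 0 0) ->
  V^T *m V = 1%:M ->
  (forall i : 'I_n.+1, A *m col i V = lam i *: col i V) ->
  (forall i j : 'I_n.+1, (i <= j)%N -> lam i <= lam j) ->
  0 < lam ord0 ->
  lam ord0 < lam ord_max ->
  (forall k, grad A c (bb_iter A c x0 k) = \sum_(i < n.+1) d k i *: col i V) ->
  let kappa := lam ord_max / lam ord0 in
  let theta := 1 - 1 / kappa in
  let C (i : 'I_n.+1) :=
    Num.max (lam i / lam ord0 - 1) (1 - lam i / lam ord_max) in
  let F (i : 'I_n.+1) :=
    Fbound (fun j => `|d 0%N (inord j)|) (fun j => `|d 1%N (inord j)|)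
           (fun j => C (inord j)) theta i in
  forall k : nat, (1 <= k)%N ->
  forall i : 'I_n.+1, `|d k i| <= F i * theta ^+ k.
Proof.
move=> hAT hPD hV heig hmono hl0 hgap hg kappa theta C F k hk i.
have hd kk j : d kk j = dotv (col j V) (grad A c (bb_iter A c x0 kk)).
  by rewrite hg dotv_sumr_coef.
have hAg kk : A *m grad A c (bb_iter A c x0 kk) = \sum_(j < n.+1) (d kk j * lam j) *: col j V.
  rewrite hg mulmx_sumr; apply: eq_bigr => j _; by rewrite -scalemxAr heig scalerA.
have hAd kk j : dotv (col j V) (A *m grad A c (bb_iter A c x0 kk)) = lam j * d kk j.
  by rewrite hAg dotv_sumr_coef // mulrC.
have hG kk : dotv (grad A c (bb_iter A c x0 kk)) (grad A c (bb_iter A c x0 kk)) = GG d kk.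
  rewrite {2}hg dotv_sumr /GG; apply: eq_bigr => j _; by rewrite dotvC -hd expr2.
have hH kk : dotv (grad A c (bb_iter A c x0 kk)) (A *m grad A c (bb_iter A c x0 kk)) = HH lam d kk.
  rewrite hAg dotv_sumr /HH; apply: eq_bigr => j _; rewrite dotvC -hd; ring.
pose al kk := match kk with
  | 0 => dotv (grad A c x0) (grad A c x0) / dotv (grad A c x0) (A *m grad A c x0)
  | k'.+1 => let p := bb_pair A c x0 k' in
      dotv (p.2 - p.1) (p.2 - p.1) / dotv (p.2 - p.1) (grad A c p.2 - grad A c p.1)
  end.
have hpair kk : (bb_pair A c x0 kk).2 =
    bb_iter A c x0 kk - al kk *: grad A c (bb_iter A c x0 kk).
  by case: kk.
have hiter kk : bb_iter A c x0 kk.+1 = (bb_pair A c x0 kk).2 by [].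
have hstep kk j : d kk.+1 j = (1 - al kk * lam j) * d kk j.
  rewrite [d kk.+1 j]hd hiter hpair gradZ dotvBr dotvZr hAd -hd; ring.
have hal0 : al 0%N = GG d 0 / HH lam d 0 by rewrite -(hG 0%N) -(hH 0%N).
have halS kk : al kk.+1 = al kk ^+ 2 * GG d kk / (al kk ^+ 2 * HH lam d kk).
  rewrite /= gradB hpair.
  have -> : bb_iter A c x0 kk - al kk *: grad A c (bb_iter A c x0 kk) - (bb_pair A c x0 kk).1
      = (- al kk) *: grad A c (bb_iter A c x0 kk).
    by rewrite /bb_iter addrAC subrr add0r scaleNr.
  rewrite -scalemxAr !dotvZl !dotvZr hG hH.
  by rewrite !mulrA mulrNN -expr2.
have eth : theta = th lam by rewrite /theta /kappa div1r invf_div.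
have thp : 0 < theta by rewrite eth th_gt0.
have eC j : C j = CC lam j by [].
have hFa j : `|d 0%N j| <= F j.
  have := @Fb_a R (fun j => `|d 0%N (inord j)|) (fun j => `|d 1%N (inord j)|)
           (fun j => C (inord j)) theta j.
  by rewrite inord_val.
have hFb (j : 'I_n.+1) : (0 < j)%N -> `|d 1%N j| <= F j * th lam.
  move=> hj; have := @Fb_b R (fun j => `|d 0%N (inord j)|) (fun j => `|d 1%N (inord j)|)
           (fun j => C (inord j)) theta j hj.
  rewrite inord_val -eth => h.
  by rewrite -ler_pdivrMr.
have hFc (j : 'I_n.+1) : (0 < j)%N -> CC lam j ^+ 2 *
    Num.sqrt (\sum_(l < n.+1 | (l < j)%N) F l ^+ 2) <= F j * th lam ^+ 2.
  move=> hj; have := @Fb_c R (fun j => `|d 0%N (inord j)|) (fun j => `|d 1%N (inord j)|)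
           (fun j => C (inord j)) theta j hj.
  rewrite inord_val -eth (big_ord_narrow (ltnW (ltn_ord j))) => h.
  have t2 : 0 < theta ^+ 2 by exact: exprn_gt0.
  rewrite -ler_pdivrMr // mulrC -eC.
  by rewrite /F /= mulrA.
have := core_bound hmono hl0 hgap hstep hal0 halS hFa hFb hFc k i.
by rewrite -eth.
Qed.
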